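(* Let $f : \widehat{\mathbb{Z}} \to \widehat{\mathbb{Z}}$ be congruence preserving and let $n, n'$ be positive integers. Then: (i) $\operatorname{lcm}(\lambda_f(n), \lambda_f(n')) = \lambda_f(\operatorname{lcm}(n,n'))$; in particular, if $n \mid n'$ then $\lambda_f(n) \mid \lambda_f(n')$. (ii) For every prime $p$ and every positive integer $a$, $\lambda_f(p^{a+1})$ divides $\operatorname{lcm}\{1,2,\dots,p\}\cdot \lambda_f(p^a)$. (iii) $\lambda_f^k(n) = \lambda_f^{k+1}(n)$ for all sufficiently large $k$. Moreover, if $f$ is tower-stable, then: (iii') $\lambda_f^k(n) = 1$ for all sufficiently large $k$.
   Context: $\widehat{\mathbb{Z}} = \varprojlim_n \mathbb{Z}/n\mathbb{Z}$; $s\equiv_n t$ means $s-t\in n\widehat{\mathbb{Z}}$. A continuous $f$ is congruence preserving if $s\equiv_n t$ implies $f(s)\equiv_n f(t)$ for all $s,t$, $n\ge1$; it then induces reductions $f_n:\mathbb{Z}/n\mathbb{Z}\to\mathbb{Z}/n\mathbb{Z}$. $\lambda_f(n)$ is the period of $f_n$: the least common multiple over $x \in \mathbb{Z}/n\mathbb{Z}$ of the cycle length of $x$ (the least $l\ge1$ with $f_n^k(x)=f_n^{k+l}(x)$ for some $k\ge0$). $\lambda_f^k$ denotes the $k$-th iterate of $\lambda_f:\mathbb{N}\to\mathbb{N}$. $\alpha(m)$ is the largest prime-power divisor of $m$. A congruence preserving $f$ is tower-stable if $\alpha(\lambda_f(p)) < p$ for every prime $p$ (equivalently, no reduction $f_p$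 is a cyclic permutation of $\mathbb{Z}/p\mathbb{Z}$ of length $p$). *)

(* Defs.v *)
From Stdlib Require Import ClassicalEpsilon.
From mathcomp Require Import all_boot.
Set Implicit Arguments. Unset Strict Implicit. Unset Printing Implicit Defensive.

(* An element is a compatible
   family of residues: zres x n is the residue modulo n.+1 (so it lies in
   [0, n]); compatibility along divisibility m.+1 | n.+1. *)
Record Zhat := MkZhat {
  zres : nat -> nat;
  zres_lt : forall n, zres n < n.+1;
  zres_compat : forall m n, m.+1 %| n.+1 -> zres n %% m.+1 = zres m }.

(* image of x in Z/nZ, for n >= 1 *)
Definition res (x : Zhat) (n : nat) : nat := zres x n.-1.

(* s == t mod n in Zhat, i.e. s - t in n Zhat, i.e. s and t have the same
   image in Z/nZ (n >= 1). *)
Definition zcong (n : nat) (s t : Zhat) : Prop := res s n = res t n.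

(* continuity for the profinite topology (basic opens are cosets of m Zhat) *)
Definition zcontinuous (f : Zhat -> Zhat) : Prop :=
  forall (s : Zhat) (n : nat), 0 < n ->
    exists m, 0 < m /\ forall t, zcong m s t -> zcong n (f s) (f t).

Definition cong_preserving (f : Zhat -> Zhat) : Prop :=
  zcontinuous f /\
  forall (s t : Zhat) (n : nat), 0 < n -> zcong n s t -> zcong n (f s) (f t).

Definition nat_to_Zhat (r : nat) : Zhat.
Proof.
refine (@MkZhat (fun n => r %% n.+1) _ _).
- by move=> n; rewrite ltn_mod.
- by move=> m n H; rewrite modn_dvdm.
Defined.

(* the reduction f_n : Z/nZ -> Z/nZ, on residues 0..n-1 *)
Definition fred (f : Zhat -> Zhat) (n : nat) (r : nat) : nat :=
  res (f (nat_to_Zhat r)) n.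

Definition cyc_pred (g : nat -> nat) (x : nat) (l : nat) : Prop :=
  0 < l /\ exists k, iter k g x = iter (k + l) g x.

Definition cyclen (g : nat -> nat) (x : nat) : nat :=
  epsilon (inhabits 0)
    (fun l => cyc_pred g x l /\ forall l', cyc_pred g x l' -> l <= l').

(* lambda_f(n): period of f_n = lcm of cycle lengths of all x in Z/nZ *)
Definition lambda (f : Zhat -> Zhat) (n : nat) : nat :=
  \big[lcmn/1]_(x < n) cyclen (fred f n) x.

(* alpha(m): largest prime-power divisor of m (p^0 = 1 counts) *)
Definition alpha (m : nat) : nat :=
  \max_(d < m.+1 | (d %| m) &&
      [exists p : 'I_m.+1, exists k : 'I_m.+1, prime p && (d == p ^ k :> nat)]) d.

Definition tower_stable (f : Zhat -> Zhat) : Prop :=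
  cong_preserving f /\ forall p, prime p -> alpha (lambda f p) < p.

Definition lcm_upto (p : nat) : nat := \big[lcmn/1]_(1 <= i < p.+1) i.

(* Main.v *)
Require Import Defs.
From Stdlib Require Import Classical ClassicalEpsilon.
From mathcomp Require Import all_boot.
Set Implicit Arguments. Unset Strict Implicit. Unset Printing Implicit Defensive.

Lemma least_ex (P : nat -> Prop) : (exists n, P n) -> exists n, P n /\ forall m, P m -> n <= m.
Proof.
move=> [n Pn]; elim/ltn_ind: n Pn => n IH Pn.
case: (classic (exists m, P m /\ m < n)) => [[m [Pm lt]] | H]; first exact: IH Pm.
exists n; split => // m Pm; rewrite leqNgt; apply/negP => lt; apply: H; exists m; split.
by [].
by [].
Qed.

Lemma pigeon m (F : nat -> nat) : (forall j, j <= m -> F j < m) ->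
  exists i j, [/\ i < j, j <= m & F i = F j].
Proof.
move=> HF; case: m HF => [|m] HF; first by have := HF 0 (leqnn 0).
pose G (j : 'I_m.+2) : 'I_m.+1 := Ordinal (HF j (ltn_ord j)).
have: ~~ injectiveb G.
  apply/negP => /injectiveP inj; have := leq_card G inj;  rewrite !card_ord.
  by rewrite ltnn.
case/injectivePn => x [y nxy eqG].
have eqF : F x = F y by have := congr1 val eqG.
case: (ltngtP x y) => [lt|lt|eq].
- by exists x, y; split => //; rewrite -ltnS.
- by exists y, x; split => //; rewrite -ltnS.
- by move: nxy; rewrite (val_inj eq) eqxx.
Qed.

Lemma cyc_shift (g : nat -> nat) x k l j :
  iter k g x = iter (k + l) g x -> iter (j + k) g x = iter (j + k + l) g x.
Proof. by move=> H; rewrite iterD H -iterD addnA. Qed.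

Lemma cyc_mul (g : nat -> nat) y l t : iter l g y = y -> iter (t * l) g y = y.
Proof.
move=> H; elim: t => [|t IH] //; by rewrite mulSn iterD IH H.
Qed.

Lemma cyclen_spec g x : (exists l, cyc_pred g x l) ->
  cyc_pred g x (cyclen g x) /\ forall l', cyc_pred g x l' -> cyclen g x <= l'.
Proof.
move=> H; rewrite /cyclen; apply: (epsilon_spec (inhabits 0) (fun l => cyc_pred g x l /\ forall l', cyc_pred g x l' -> l <= l')); exact: least_ex.
Qed.

Lemma cyc_dvd g x l : (exists l0, cyc_pred g x l0) ->
  (cyc_pred g x l <-> 0 < l /\ cyclen g x %| l).
Proof.
move=> /cyclen_spec [[c0 [k0 Hk0]] Hmin]; set c := cyclen g x in c0 Hk0 Hmin *.
split.
- move=> [l0 [k1 Hk1]]; split => //.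
  set K := k1 + k0.
  have Hc : iter c g (iter K g x) = iter K g x.
    by rewrite -iterD addnC /K -(cyc_shift k1 Hk0).
  have Hl : iter l g (iter K g x) = iter K g x.
    by rewrite -iterD addnC /K (addnC k1) -(cyc_shift k0 Hk1).
  have [r0|r0'] := posnP (l %% c); first by rewrite /dvdn r0.
  have : c <= l %% c.
    apply: Hmin; split => //; exists K.
    have E : iter l g (iter K g x) = iter (l %% c) g (iter K g x).
      by rewrite {1}(divn_eq l c) addnC iterD (cyc_mul _ Hc).
    by rewrite addnC iterD -E Hl.
  by rewrite leqNgt ltn_mod c0.
- case=> l0 /dvdnP [t Ht]; split => //; exists k0; rewrite Ht.
  have Hc : iter c g (iter k0 g x) = iter k0 g x by rewrite -iterD addnC.
  by rewrite addnC iterD (cyc_mul _ Hc).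
Qed.

Lemma res_lt x n : 0 < n -> res x n < n.
Proof. by case: n => // n _; rewrite /res zres_lt. Qed.

Lemma res_nat r d : 0 < d -> res (nat_to_Zhat r) d = r %% d.
Proof. by case: d. Qed.

Lemma fred_lt f n r : 0 < n -> fred f n r < n.
Proof. exact: res_lt. Qed.

Lemma iter_lt f n k r : 0 < n -> r < n -> iter k (fred f n) r < n.
Proof. by move=> n0 rn; case: k => [|k] //=; exact: fred_lt. Qed.

Lemma fred_mod f (hf : cong_preserving f) d N r : 0 < d -> 0 < N -> d %| N ->
  fred f N r %% d = fred f d (r %% d).
Proof.
move=> d0 N0 dN; rewrite /fred.
have -> : res (f (nat_to_Zhat r)) N %% d = res (f (nat_to_Zhat r)) d.
  case: d d0 dN => // d _; case: N N0 => // N _ dN.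
  by rewrite /res /= zres_compat.
apply: hf.2 => //; rewrite /zcong !res_nat // modn_mod //.
Qed.

Lemma iter_mod f (hf : cong_preserving f) d N r k : 0 < d -> 0 < N -> d %| N ->
  iter k (fred f N) r %% d = iter k (fred f d) (r %% d).
Proof.
move=> d0 N0 dN; elim: k => [|k IH] //=.
by rewrite fred_mod // IH.
Qed.

Lemma cyc_exists f n x : 0 < n -> x < n -> exists l, cyc_pred (fred f n) x l.
Proof.
move=> n0 xn.
have [i [j [ij jn E]]] := @pigeon n (fun j => iter j (fred f n) x) (fun j _ => @iter_lt f n j x n0 xn).
exists (j - i); split; first by rewrite subn_gt0.
by exists i; rewrite subnKC // ltnW.
Qed.

Lemma lambda_gt0 f n : 0 < lambda f n.
Proof.
rewrite /lambda; case: n => [|n]; first by rewrite big_ord0.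
apply: (big_ind (fun v => 0 < v)) => //; first by move=> a b a0 b0; rewrite lcmn_gt0 a0 b0.
move=> i _; have [[c0 _] _] := cyclen_spec (cyc_exists f (ltn0Sn n) (ltn_ord i)).
exact: c0.
Qed.

Definition Pper f n L := forall x, x < n -> exists k, iter k (fred f n) x = iter (k + L) (fred f n) x.

Lemma lambda_dvdP f n L : 0 < n -> 0 < L -> (lambda f n %| L <-> Pper f n L).
Proof.
move=> n0 L0; rewrite /lambda; split.
- move/dvdn_biglcmP => H x xn.
  have := H (Ordinal xn) isT => /= cd.
  have [_ [k Hk]] := (cyc_dvd L (cyc_exists f n0 xn)).2 (conj L0 cd).
  by exists k.
- move=> H; apply/dvdn_biglcmP => i _.
  have [k Hk] := H i (ltn_ord i).
  by have [] := (cyc_dvd L (cyc_exists f n0 (ltn_ord i))).1 (conj L0 (ex_intro _ k Hk)).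
Qed.

Lemma lambda1 f : lambda f 1 = 1.
Proof.
apply/eqP; rewrite -dvdn1; apply/lambda_dvdP => // x; rewrite ltnS leqn0 => /eqP ->.
exists 0 => /=; have := fred_lt f 0 (ltn0Sn 0); rewrite ltnS leqn0 => /eqP ->. by [].
Qed.

Lemma Pper_restrict f (hf : cong_preserving f) n N L : 0 < n -> 0 < N -> n %| N ->
  Pper f N L -> Pper f n L.
Proof.
move=> n0 N0 nN H x xn.
have xN : x < N by apply: (leq_trans xn); exact: dvdn_leq.
have [k Hk] := H x xN; exists k.
by rewrite -(modn_small xn) -!(@iter_mod f hf n N x) // Hk.
Qed.

Lemma eq_mod2 n n' u v : 0 < n -> 0 < n' -> u < lcmn n n' -> v < lcmn n n' ->
  u %% n = v %% n -> u %% n' = v %% n' -> u = v.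
Proof.
wlog uv : u v / u <= v.
  move=> W n0 n0' ul vl e1 e2; case: (leqP u v) => h; first exact: W.
  by apply/esym; apply: W => //; apply: ltnW.
move=> n0 n0' ul vl /eqP e1 /eqP e2.
rewrite eq_sym eqn_mod_dvd // in e1; rewrite eq_sym eqn_mod_dvd // in e2.
have : lcmn n n' %| v - u by rewrite dvdn_lcm e1 e2.
have [E|vu0] := posnP (v - u).
  by move=> _; apply/eqP; rewrite eqn_leq uv /= -subn_eq0 E.
move/(dvdn_leq vu0); rewrite leqNgt => /negP []. 
by apply: (leq_ltn_trans (leq_subr _ _)).
Qed.

Lemma Pper_lcm f (hf : cong_preserving f) n n' L : 0 < n -> 0 < n' ->
  Pper f n L -> Pper f n' L -> Pper f (lcmn n n') L.
Proof.
move=> n0 n0' H H' x xN.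
have N0 : 0 < lcmn n n' by rewrite lcmn_gt0 n0 n0'.
have [k1 Hk1] := H (x %% n) (ltn_pmod _ n0).
have [k2 Hk2] := H' (x %% n') (ltn_pmod _ n0').
exists (k2 + k1); apply: (@eq_mod2 n n') => //; try exact: iter_lt.
- rewrite !(iter_mod hf) ?dvdn_lcml //.
  exact: cyc_shift.
- rewrite !(iter_mod hf) ?dvdn_lcmr // (addnC k2).
  exact: cyc_shift.
Qed.

Lemma lambda_mono f (hf : cong_preserving f) n N : 0 < N -> n %| N ->
  lambda f n %| lambda f N.
Proof.
move=> N0 nN; have n0 : 0 < n by move: nN; case: n => //; rewrite dvd0n => /eqP E; rewrite E in N0.
apply/lambda_dvdP => //; first exact: lambda_gt0.
apply: (Pper_restrict hf n0 N0 nN); apply/lambda_dvdP => //; exact: lambda_gt0.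
Qed.

Lemma lambda_lcm f (hf : cong_preserving f) n n' : 0 < n -> 0 < n' ->
  lcmn (lambda f n) (lambda f n') = lambda f (lcmn n n').
Proof.
move=> n0 n0'; have N0 : 0 < lcmn n n' by rewrite lcmn_gt0 n0 n0'.
apply/eqP; rewrite eqn_dvd; apply/andP; split.
  by rewrite dvdn_lcm !(lambda_mono hf) // ?dvdn_lcml ?dvdn_lcmr.
have L0 : 0 < lcmn (lambda f n) (lambda f n') by rewrite lcmn_gt0 !lambda_gt0.
apply/lambda_dvdP => //; apply: Pper_lcm => //; apply/lambda_dvdP => //;
  by rewrite ?dvdn_lcml ?dvdn_lcmr.
Qed.

Lemma lu0 : lcm_upto 0 = 1.
Proof. by rewrite /lcm_upto big_geq. Qed.

Lemma luS m : lcm_upto m.+1 = lcmn (lcm_upto m) m.+1.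
Proof. by rewrite /lcm_upto big_nat_recr. Qed.

Lemma lu_gt0 m : 0 < lcm_upto m.
Proof. by elim: m => [|m IH]; rewrite ?lu0 // luS lcmn_gt0 IH. Qed.

Lemma lu_dvd m d : 0 < d -> d <= m -> d %| lcm_upto m.
Proof.
move=> d0; elim: m => [|m IH]; first by rewrite leqn0 => /eqP E; rewrite E in d0.
rewrite luS leq_eqVlt => /orP [/eqP ->| ]; first exact: dvdn_lcmr.
by rewrite ltnS => /IH H; apply: (dvdn_trans H); exact: dvdn_lcml.
Qed.

Lemma lu_prime m r : prime r -> r %| lcm_upto m -> r <= m.
Proof.
move=> pr; elim: m => [|m IH]; first by rewrite lu0 dvdn1 => /eqP E; rewrite E in pr.
rewrite luS => H.
have : r %| lcm_upto m * m.+1.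
  apply: (dvdn_trans H); rewrite dvdn_lcm dvdn_mulr ?dvdn_mull //.
rewrite Euclid_dvdM // => /orP [/IH h|h]; first exact: leqW.
exact: dvdn_leq.
Qed.

Lemma lu_logn p m : prime p -> m <= p -> logn p (lcm_upto m) <= 1.
Proof.
move=> pr; elim: m => [|m IH]; first by rewrite lu0 logn1.
move=> mp; rewrite luS logn_lcm ?lu_gt0 // geq_max; apply/andP; split; first exact: IH (ltnW mp).
rewrite leqNgt; apply/negP => h.
have h1 : p ^ 2 %| m.+1 by rewrite pfactor_dvdn.
have h2 : p ^ 2 <= m.+1 := dvdn_leq (ltn0Sn m) h1.
have p1 := prime_gt1 pr.
have h3 : p < p ^ 2 by rewrite -{1}(expn1 p) ltn_exp2l.
have := leq_trans h2 mp.
by rewrite leqNgt h3.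
Qed.
Lemma lambda_mul f (hf : cong_preserving f) n m : 0 < n -> 0 < m ->
  lambda f (n * m) %| lcm_upto m * lambda f n.
Proof.
move=> n0 m0; have N0 : 0 < n * m by rewrite muln_gt0 n0 m0.
set L := lambda f n; set M := lcm_upto m; set g := fred f (n * m).
have L0 : 0 < L by exact: lambda_gt0.
have nN : n %| n * m by exact: dvdn_mulr.
apply/lambda_dvdP => //; first by rewrite muln_gt0 L0 lu_gt0.
move=> x xN.
have [k Hk] := (lambda_dvdP f n0 L0).1 (dvdnn _) (x %% n) (ltn_pmod _ n0).
set y := iter k g x.
have yN : y < n * m by exact: iter_lt.
have Hy : iter L g y %% n = y %% n.
  by rewrite /y -iterD !(iter_mod hf) // addnC -Hk.
pose z j := iter (j * L) g y.
have Hz : forall j, z j %% n = y %% n.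
  elim=> [|j IH] //.
  have -> : z j.+1 = iter L g (z j) by rewrite /z mulSn iterD.
  by rewrite (@iter_mod f hf n (n*m) (z j) L) // IH -(@iter_mod f hf n (n*m) y L) // Hy.
have zN : forall j, z j < n * m by move=> j; exact: iter_lt.
have [i [j [ij jm E]]] := @pigeon m (fun j => z j %/ n)
   (fun j _ => ltac:(by rewrite ltn_divLR // mulnC zN)).
have Ez : z i = z j by rewrite (divn_eq (z i) n) (divn_eq (z j) n) E !Hz.
set d := j - i.
have dM : d %| M by apply: lu_dvd; rewrite ?subn_gt0 // (leq_trans (leq_subr _ _) jm).
have Hd : iter (d * L) g (z i) = z i.
  by rewrite {2}Ez /z -iterD -mulnDl /d subnK // ltnW.
case/dvdnP: dM => t Mt.
exists (i * L + k).
have Zi : iter (i * L + k) g x = z i by rewrite iterD.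
by rewrite Zi addnC iterD Zi Mt -mulnA (cyc_mul _ Hd).
Qed.

Lemma pexp_gt0 p e : prime p -> 0 < p ^ e.
Proof. by move=> pr; rewrite expn_gt0 prime_gt0. Qed.

Lemma lambda_pow_dvd f (hf : cong_preserving f) p e : prime p ->
  lambda f (p ^ e) %| lcm_upto p ^ e.
Proof.
move=> pr; elim: e => [|e IH]; first by rewrite expn0 lambda1.
rewrite expnSr expnS.
apply: (dvdn_trans (lambda_mul hf (pexp_gt0 e pr) (prime_gt0 pr))).
exact: dvdn_mul.
Qed.

Lemma lcm_coprime a b : coprime a b -> lcmn a b = a * b.
Proof. by move=> /eqP cab; rewrite -muln_lcm_gcd cab muln1. Qed.

Lemma lambda_primes f (hf : cong_preserving f) m r : 0 < m -> prime r ->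
  r %| lambda f m -> exists p, [/\ prime p, p %| m & r <= p].
Proof.
move=> + pr; elim/ltn_ind: m => m IH m0.
have [m1|m1] := leqP m 1.
  have -> : m = 1 by apply/eqP; rewrite eqn_leq m1 m0.
  by rewrite lambda1 dvdn1 => /eqP E; rewrite E in pr.
set p := pdiv m.
have pp : prime p by exact: pdiv_prime.
have Em : lcmn (m`_p) (m`_p^') = m by rewrite lcm_coprime ?coprime_partC // partnC.
have a1 : 1 < m`_p by rewrite p_part_gt1 pi_pdiv.
have b0 : 0 < m`_p^' by exact: part_gt0.
have blt : m`_p^' < m by rewrite -{2}(partnC p m0) ltn_Pmull.
rewrite -Em -lambda_lcm ?part_gt0 // => H.
have : r %| lambda f m`_p * lambda f m`_p^'.
  by apply: (dvdn_trans H); rewrite dvdn_lcm dvdn_mulr ?dvdn_mull.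
rewrite Euclid_dvdM // => /orP [h|h].
- exists p; split => //; first by rewrite Em pdiv_dvd.
  move: h; rewrite p_part => /dvdn_trans /(_ (lambda_pow_dvd hf _ pp)).
  rewrite Euclid_dvdX // => /andP [h _]; exact: lu_prime h.
- have [q [qp qd rq]] := IH _ blt b0 h.
  exists q; split => //; apply: (dvdn_trans qd); rewrite Em; exact: dvdn_part.
Qed.

Lemma logn_partn p m (pi : nat_pred) : logn p (m`_pi) = (p \in pi) * logn p m.
Proof.
case: (boolP (p \in pi)) => H.
  rewrite mul1n -logn_part partn_part; first exact: logn_part.
  by move=> q; rewrite inE => /eqP ->.
rewrite mul0n; apply/eqP; rewrite eqn0Ngt logn_gt0; apply/negP => Hp.
by move: H; rewrite (pnatPpi (part_pnat pi m) Hp).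
Qed.

Definition gtp (q : nat) : nat_pred := [pred p | q < p].
Definition ltp (q : nat) : nat_pred := [pred p | p < q].
Lemma in_gtp q p : (p \in gtp q) = (q < p). Proof. by []. Qed.
Lemma in_ltp q p : (p \in ltp q) = (p < q). Proof. by []. Qed.

Lemma logn_pow_prime p Q e : prime Q -> logn p (Q ^ e) = e * (p == Q).
Proof. by move=> pQ; rewrite lognX logn_prime. Qed.

Lemma decomp Q m : prime Q -> 0 < m ->
  m = lcmn (m`_(gtp Q)) (lcmn (Q ^ logn Q m) (m`_(ltp Q))).
Proof.
move=> pQ m0; apply: eqn_from_log => //.
  by rewrite !lcmn_gt0 !part_gt0 expn_gt0 prime_gt0.
move=> p; rewrite !logn_lcm ?lcmn_gt0 ?part_gt0 ?expn_gt0 ?prime_gt0 //.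
rewrite !logn_partn logn_pow_prime // in_gtp in_ltp.
case: (ltngtP p Q) => [h|h|->].
- by rewrite muln0 mul0n mul1n max0n max0n.
- by rewrite mul1n mul0n muln0 !maxn0.
- by rewrite !mul0n muln1 max0n maxn0.
Qed.

Lemma lambda_logn f (hf : cong_preserving f) Q m : prime Q -> 0 < m ->
  logn Q (lambda f m) =
  maxn (logn Q (lambda f (m`_(gtp Q)))) (logn Q (lambda f (Q ^ logn Q m))).
Proof.
move=> pQ m0.
have E0 : logn Q (lambda f (m`_(ltp Q))) = 0.
  apply/eqP; rewrite eqn0Ngt logn_gt0 mem_primes; apply/negP => /and3P [_ _ h].
  have [p [pp pd Qp]] := lambda_primes hf (part_gt0 _ _) pQ h.
  have : 0 < logn p (m`_(ltp Q)) by rewrite logn_gt0 mem_primes pp part_gt0 pd.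
  by rewrite logn_partn in_ltp (ltnNge p Q) Qp mul0n.
rewrite {1}(decomp pQ m0) -!lambda_lcm ?lcmn_gt0 ?part_gt0 ?expn_gt0 ?prime_gt0 //.
rewrite !logn_lcm ?lcmn_gt0 ?lambda_gt0 // E0 maxn0; by [].
Qed.

Lemma h_le f (hf : cong_preserving f) Q e : prime Q -> logn Q (lambda f (Q ^ e)) <= e.
Proof.
move=> pQ; elim: e => [|e IH]; first by rewrite expn0 lambda1 logn1.
rewrite expnSr.
have H := lambda_mul hf (pexp_gt0 e pQ) (prime_gt0 pQ).
apply: (leq_trans (dvdn_leq_log _ _ H)); first by rewrite muln_gt0 lu_gt0 lambda_gt0.
rewrite lognM ?lu_gt0 ?lambda_gt0 //.
rewrite -add1n; apply: leq_add => //; exact: lu_logn.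
Qed.

Lemma h_lt f (hf : cong_preserving f) Q e : prime Q ->
  logn Q (lambda f Q) = 0 -> logn Q (lambda f (Q ^ e)) <= e.-1.
Proof.
move=> pQ H0; case: e => [|e]; first by rewrite expn0 lambda1 logn1.
elim: e => [|e IH]; first by rewrite expn1 H0.
rewrite expnSr.
have H := lambda_mul hf (pexp_gt0 e.+1 pQ) (prime_gt0 pQ).
apply: (leq_trans (dvdn_leq_log _ _ H)); first by rewrite muln_gt0 lu_gt0 lambda_gt0.
rewrite lognM ?lu_gt0 ?lambda_gt0 //.
rewrite -add1n; apply: leq_add => //; exact: lu_logn.
Qed.

Lemma h_mono f (hf : cong_preserving f) Q a b : prime Q -> a <= b ->
  logn Q (lambda f (Q ^ a)) <= logn Q (lambda f (Q ^ b)).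
Proof.
move=> pQ ab; apply: dvdn_leq_log; first exact: lambda_gt0.
apply: lambda_mono => //; first by rewrite expn_gt0 prime_gt0.
exact: dvdn_exp2l.
Qed.

Lemma stab_phi (phi : nat -> nat) : (forall a b, a <= b -> phi a <= phi b) ->
  forall a, phi a <= a -> exists J, forall j, J <= j -> iter j phi a = iter J phi a.
Proof.
move=> mono; elim/ltn_ind => a IH ha.
case: (ltngtP (phi a) a) => [lt|gt|eq].
- have [J HJ] := IH _ lt (mono _ _ ha).
  exists J.+1 => j; case: j => [|j] // Jj.
  by rewrite !iterSr HJ.
- by move: ha; rewrite leqNgt gt.
- have C : forall j, iter j phi a = a by elim=> [|j IHj] //=; rewrite IHj eq.
  by exists 0 => j _; rewrite !C.
Qed.

Lemma stab_seq (x : nat -> nat) c (h : nat -> nat) :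
  (forall a b, a <= b -> h a <= h b) -> (forall a, h a <= a) ->
  (forall j, x j.+1 = maxn c (h (x j))) -> exists J, forall j, J <= j -> x j = x J.
Proof.
move=> mono hle Hx.
pose phi a := maxn c (h a).
have xe : forall j, x j = iter j phi (x 0) by elim=> [|j IH] //=; rewrite -IH Hx.
case: (leqP (x 1) (x 0)) => H.
- have ph : phi (x 0) <= x 0 by rewrite /phi -Hx.
  have mono' : forall a b, a <= b -> phi a <= phi b.
    move=> a b ab; rewrite /phi geq_max leq_maxl /=.
    exact: (leq_trans (mono _ _ ab) (leq_maxr _ _)).
  have [J HJ] := stab_phi mono' ph.
  by exists J => j Jj; rewrite (xe j) (xe J) HJ.
- have x1 : x 1 = c.
    move: H; rewrite Hx; case: (leqP c (h (x 0))) => hc.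
      move=> H; have := hle (x 0); by rewrite leqNgt H.
    by [].
  have xc : forall j, 0 < j -> x j = c.
    elim=> [|j IH] // _; case: j IH => [|j] IH; first exact: x1.
    by rewrite Hx IH //; apply/maxn_idPl; exact: hle.
  by exists 1 => j j1; rewrite (xc j j1) (xc 1 isT).
Qed.

Lemma down_ind (P : nat -> Prop) N : P N -> (forall q, P q.+1 -> P q) -> P 0.
Proof. by elim: N => [|N IH] // HN step; apply: IH => //; apply: step. Qed.

Lemma part_gtp0 m : 0 < m -> m`_(gtp 0) = m.
Proof.
move=> m0; apply: eqn_from_log; [exact: part_gt0 | exact: m0 |].
move=> p; rewrite logn_partn in_gtp; case: p => [|p]; last by rewrite mul1n.
rewrite mul0n lognE; have -> : prime 0 = false by []. by [].
Qed.

Lemma split_part q m : 0 < m ->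
  m`_(gtp q) = m`_(gtp q.+1) * q.+1 ^ logn q.+1 m.
Proof.
move=> m0; case: (boolP (prime q.+1)) => pQ; last first.
  have -> : logn q.+1 m = 0 by rewrite /logn (negbTE pQ).
  rewrite expn0 muln1; apply: eqn_from_log; [exact: part_gt0 | exact: part_gt0 |] => p.
  rewrite !logn_partn !in_gtp; case: (ltngtP p q.+1) => [h|h|->].
  - by [].
  - by [].
  - by rewrite mul1n mul0n /logn (negbTE pQ).
apply: eqn_from_log; [exact: part_gt0 | by rewrite muln_gt0 part_gt0 pexp_gt0 |] => p.
rewrite (lognM _ (part_gt0 _ _) (pexp_gt0 _ pQ)) !logn_partn logn_pow_prime // !in_gtp.
case: (ltngtP p q.+1) => [h|h|->].
- by rewrite ?mul0n ?mul1n ?muln0 ?muln1 ?addn0 ?add0n.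
- by rewrite ?mul0n ?mul1n ?muln0 ?muln1 ?addn0 ?add0n.
- by rewrite ?mul0n ?mul1n ?muln0 ?muln1 ?addn0 ?add0n.
Qed.

Lemma nk_gt0 f n0 k : 0 < n0 -> 0 < iter k (lambda f) n0.
Proof. by case: k => [|k] // _; rewrite iterS lambda_gt0. Qed.

Lemma nk_primes f (hf : cong_preserving f) n0 k : 0 < n0 -> forall p, prime p ->
  p %| iter k (lambda f) n0 -> p <= n0.
Proof.
move=> n00; elim: k => [|k IH] p pp; first exact: dvdn_leq.
rewrite iterS => H.
have [q [qp qd pq]] := lambda_primes hf (nk_gt0 f k n00) pp H.
exact: leq_trans pq (IH q qp qd).
Qed.

Lemma top_part f (hf : cong_preserving f) n0 k : 0 < n0 ->
  (iter k (lambda f) n0)`_(gtp n0) = 1.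
Proof.
move=> n00; apply: eqn_from_log; [exact: part_gt0 | by [] |] => p.
rewrite logn_partn in_gtp logn1; case: (leqP p n0) => h.
  by rewrite mul0n.
rewrite mul1n; apply/eqP; rewrite eqn0Ngt logn_gt0 mem_primes.
apply/negP => /and3P [pp _ pd].
by have := nk_primes hf n00 pp pd; rewrite leqNgt h.
Qed.

Lemma stepC f (hf : cong_preserving f) n0 q : 0 < n0 ->
  (exists K, forall k, K <= k ->
     (iter k (lambda f) n0)`_(gtp q.+1) = (iter K (lambda f) n0)`_(gtp q.+1)) ->
  (exists K, forall k, K <= k ->
     (iter k (lambda f) n0)`_(gtp q) = (iter K (lambda f) n0)`_(gtp q)).
Proof.
move=> n00 [K HK]; case: (boolP (prime q.+1)) => pQ; last first.
  have E : forall m, logn q.+1 m = 0 by move=> m; rewrite /logn (negbTE pQ).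
  exists K => k Kk.
  by rewrite (split_part q (nk_gt0 f k n00)) (split_part q (nk_gt0 f K n00)) (HK k Kk) !E.
set A := (iter K (lambda f) n0)`_(gtp q.+1).
pose x j := logn q.+1 (iter (K + j) (lambda f) n0).
have Hx : forall j, x j.+1 =
    maxn (logn q.+1 (lambda f A)) (logn q.+1 (lambda f (q.+1 ^ x j))).
  move=> j; rewrite /x addnS iterS (lambda_logn hf pQ (nk_gt0 f (K + j) n00)).
  by rewrite (HK (K + j) (leq_addr j K)).
have [J HJ] := stab_seq (fun a b ab => @h_mono f hf q.+1 a b pQ ab)
   (fun a => @h_le f hf q.+1 a pQ) Hx.
exists (K + J) => k Kk.
have Kk' : K <= k by exact: leq_trans (leq_addr J K) Kk.
rewrite (split_part q (nk_gt0 f k n00)) (split_part q (nk_gt0 f (K + J) n00)).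
rewrite (HK k Kk') (HK (K + J) (leq_addr J K)).
have -> : logn q.+1 (iter k (lambda f) n0) = x (k - K) by rewrite /x subnKC.
rewrite -/(x J) HJ //.
by rewrite leq_subRL.
Qed.

Lemma eventually_const f (hf : cong_preserving f) n0 : 0 < n0 ->
  exists K, forall k, K <= k -> iter k (lambda f) n0 = iter K (lambda f) n0.
Proof.
move=> n00.
have := @down_ind (fun q => exists K, forall k, K <= k ->
     (iter k (lambda f) n0)`_(gtp q) = (iter K (lambda f) n0)`_(gtp q)) n0.
case.
- by exists 0 => k _; rewrite !(top_part hf).
- by move=> q; apply: stepC.
move=> K HK; exists K => k Kk; have := HK k Kk.
by rewrite !part_gtp0 ?nk_gt0.
Qed.

Lemma stepD f (hf : cong_preserving f) n0 q : 0 < n0 ->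
  (forall p, prime p -> logn p (lambda f p) = 0) ->
  (exists K, forall k, K <= k -> (iter k (lambda f) n0)`_(gtp q.+1) = 1) ->
  (exists K, forall k, K <= k -> (iter k (lambda f) n0)`_(gtp q) = 1).
Proof.
move=> n00 ts [K HK]; case: (boolP (prime q.+1)) => pQ; last first.
  have E : forall m, logn q.+1 m = 0 by move=> m; rewrite /logn (negbTE pQ).
  exists K => k Kk.
  by rewrite (split_part q (nk_gt0 f k n00)) (HK k Kk) E.
pose x j := logn q.+1 (iter (K + j) (lambda f) n0).
have Hx : forall j, x j.+1 <= (x j).-1.
  move=> j; rewrite /x addnS iterS (lambda_logn hf pQ (nk_gt0 f (K + j) n00)).
  rewrite (HK (K + j) (leq_addr j K)) lambda1 logn1 max0n.
  exact: (h_lt hf _ pQ (ts _ pQ)).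
have Hx0 : forall j, x j <= x 0 - j.
  elim=> [|j IH]; first by rewrite subn0.
  apply: (leq_trans (Hx j)); rewrite subnS -!subn1; exact: leq_sub2r.
exists (K + x 0) => k Kk.
have Kk' : K <= k by exact: leq_trans (leq_addr _ K) Kk.
rewrite (split_part q (nk_gt0 f k n00)) (HK k Kk').
have -> : logn q.+1 (iter k (lambda f) n0) = x (k - K) by rewrite /x subnKC.
have : x (k - K) <= 0.
  apply: (leq_trans (Hx0 _)); rewrite leqn0 subn_eq0 leq_subRL //.
by rewrite leqn0 => /eqP ->.
Qed.

Lemma ts_logn f : tower_stable f -> forall p, prime p -> logn p (lambda f p) = 0.
Proof.
move=> [hf ts] p pp; apply/eqP; rewrite eqn0Ngt logn_gt0 mem_primes.
apply/negP => /and3P [_ L0 pd].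
have := ts p pp; rewrite /alpha.
have plt : p < (lambda f p).+1 by rewrite ltnS dvdn_leq.
have one : 1 < (lambda f p).+1 by rewrite ltnS.
set i0 := Ordinal plt.
have : nat_of_ord i0 <= \max_(d < (lambda f p).+1 | (d %| lambda f p) &&
      [exists p0 : 'I_(lambda f p).+1, exists k : 'I_(lambda f p).+1,
        prime p0 && (d == p0 ^ k :> nat)]) d.
  apply: (@leq_bigmax_cond _ _ (fun d : 'I_(lambda f p).+1 => nat_of_ord d) i0).
  rewrite /= pd /=; apply/existsP; exists i0; apply/existsP; exists (Ordinal one).
  by rewrite /= pp expn1 eqxx.
move=> h1 h2; have := leq_ltn_trans h1 h2; by rewrite ltnn.
Qed.

Lemma eventually_one f n0 : tower_stable f -> 0 < n0 ->
  exists K, forall k, K <= k -> iter k (lambda f) n0 = 1.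
Proof.
move=> tsf n00; have hf := tsf.1; have ts := ts_logn tsf.
have := @down_ind (fun q => exists K, forall k, K <= k ->
     (iter k (lambda f) n0)`_(gtp q) = 1) n0.
case.
- by exists 0 => k _; rewrite (top_part hf).
- by move=> q; apply: stepD.
move=> K HK; exists K => k Kk; have := HK k Kk.
by rewrite part_gtp0 ?nk_gt0.
Qed.

Unset Implicit Arguments.

Theorem lemma3p12 (f : Zhat -> Zhat) (hf : cong_preserving f) :
  (forall n n' : nat, 0 < n -> 0 < n' ->
     lcmn (lambda f n) (lambda f n') = lambda f (lcmn n n') /\
     (n %| n' -> lambda f n %| lambda f n')) /\
  (forall p a : nat, prime p -> 0 < a ->
     lambda f (p ^ a.+1) %| lcm_upto p * lambda f (p ^ a)) /\
  (forall n : nat, 0 < n -> exists K, forall k, K <= k ->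
     iter k (lambda f) n = iter k.+1 (lambda f) n) /\
  (tower_stable f -> forall n : nat, 0 < n -> exists K, forall k, K <= k ->
     iter k (lambda f) n = 1).
Proof.
split; [|split; [|split]].
- move=> n n' n0 n0'; split; first exact: lambda_lcm.
  by move=> nn'; apply: lambda_mono.
- move=> p a pp _; rewrite expnSr.
  by have := lambda_mul hf (pexp_gt0 a pp) (prime_gt0 pp); apply.
- move=> n n0; have [K HK] := eventually_const hf n0.
  by exists K => k Kk; rewrite HK // HK // (leq_trans Kk).
- by move=> tsf n n0; apply: eventually_one.
Qed.
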